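(* Let $E=\mathcal O_{\mathbb P^1}(a)\oplus\mathcal O_{\mathbb P^1}(b)$ with $a,b\ge1$. Then $\mathrm{Gr}_2(H^0(E))\cap\mathbb{P}K^\perp$ is a transversal intersection if and only if $a=b=1$.
   Context: $K^\perp:=\ker(\det:\bigwedge^2H^0(E)\to H^0(\det E))$, and $\mathrm{Gr}_2(H^0(E))\subset\mathbb{P}(\bigwedge^2H^0(E))$ is the Plücker embedding. Two smooth subvarieties $S_1,S_2\subset\mathbb P^N$ intersect transversely if $T_pS_1+T_pS_2=T_p\mathbb P^N$ for every $p\in S_1\cap S_2$. *)

(* Defs.v *)
From HB Require Import structures.
From mathcomp Require Import all_boot all_order all_algebra.
Set Implicit Arguments. Unset Strict Implicit. Unset Printing Implicit Defensive.
Import Order.TTheory GRing.Theory Num.Theory.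
Local Open Scope ring_scope.

(* H^0(O(a)) is identified (dehomogenizing y = 1) with polynomials of degree
   <= a, with basis X^0, ..., X^a.  Hence H^0(E) = F^(a+1) x F^(b+1), encoded
   as row vectors 'rV[F]_(a.+1 + b.+1): the first block holds the coefficients
   of the O(a)-component, the second block those of the O(b)-component. *)
Notation H0E F a b := ('rV[F]_(a.+1 + b.+1)) (only parsing).

Definition sec1 (F : fieldType) (a b : nat) (u : H0E F a b) : {poly F} :=
  \poly_(i < a.+1) u 0 (lshift b.+1 (@inord a i)).
Definition sec2 (F : fieldType) (a b : nat) (u : H0E F a b) : {poly F} :=
  \poly_(j < b.+1) u 0 (rshift a.+1 (@inord b j)).

(* The exterior square  /\^2 V  of V = F^n is realized as the space of
   alternating n x n matrices, with  u /\ v := u^T v - v^T u. *)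
Definition alternating (F : fieldType) (n : nat) (w : 'M[F]_n) : Prop :=
  (forall i j, w i j = - w j i) /\ (forall i, w i i = 0).

Definition wedge (F : fieldType) (n : nat) (u v : 'rV[F]_n) : 'M[F]_n :=
  u^T *m v - v^T *m u.

(* det : /\^2 H^0(E) -> H^0(det E) = H^0(O(a+b)) (polynomials of degree
   <= a+b): the linear map with  det (s /\ t) = s_1 t_2 - s_2 t_1
   (see lemma-free remark: detE (wedge s t) = sec1 s * sec2 t - sec2 s * sec1 t). *)
Definition detE (F : fieldType) (a b : nat) (w : 'M[F]_(a.+1 + b.+1)) : {poly F} :=
  \sum_(i < a.+1) \sum_(j < b.+1)
     w (lshift b.+1 i) (rshift a.+1 j) *: 'X^(i + j).

(* Affine cone over P K^perp : the kernel of det inside /\^2 H^0(E). *)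
Definition Kperp (F : fieldType) (a b : nat) (w : 'M[F]_(a.+1 + b.+1)) : Prop :=
  alternating w /\ detE w = 0.

(* A point of Gr_2(H^0(E)) in the Plücker embedding is [s /\ t] with s, t
   linearly independent.  The affine-cone tangent space of the Grassmannian at
   s /\ t is the image of the differential of (u,v) |-> u /\ v at (s,t), i.e.
   { h /\ t + s /\ k }; that of the linear space P K^perp is K^perp.
   Transversality at [s /\ t] (T Gr + T PK^perp = T P(/\^2 H^0 E)) is
   equivalent to: the two affine-cone tangent spaces span /\^2 H^0(E). *)
Definition transversal_at (F : fieldType) (a b : nat) (s t : H0E F a b) : Prop :=
  forall w : 'M[F]_(a.+1 + b.+1), alternating w ->
    exists (h k : H0E F a b) (kap : 'M[F]_(a.+1 + b.+1)),
      @Kperp F a b kap /\ w = wedge h t + wedge s k + kap.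

Definition GrK_transversal (F : fieldType) (a b : nat) : Prop :=
  forall s t : H0E F a b,
    \rank (col_mx s t) = 2%N -> detE (wedge s t) = 0 -> @transversal_at F a b s t.

(* Main.v *)
Require Import Defs.
From HB Require Import structures.
From mathcomp Require Import all_boot all_order all_algebra ring.
Set Implicit Arguments. Unset Strict Implicit. Unset Printing Implicit Defensive.
Import Order.TTheory GRing.Theory Num.Theory.
Local Open Scope ring_scope.

Lemma wedgeE (F : fieldType) n (u v : 'rV[F]_n) i j :
  wedge u v i j = u 0 i * v 0 j - v 0 i * u 0 j.
Proof. by rewrite /wedge !mxE !big_ord1 !mxE. Qed.

Lemma wedge_alt (F : fieldType) n (u v : 'rV[F]_n) : alternating (wedge u v).
Proof. split=> [i j|i]; rewrite !wedgeE; ring. Qed.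

Lemma detE_top (F : fieldType) a b (w : 'M[F]_(a.+1 + b.+1)) :
  (detE w)`_(a + b) = w (lshift b.+1 (@ord_max a)) (rshift a.+1 (@ord_max b)).
Proof.
rewrite /detE coef_sum big_ord_recr /= big1 ?add0r => [|i _].
  rewrite coef_sum big_ord_recr /= big1 ?add0r => [|j _].
    by rewrite coefZ coefXn eqxx mulr1.
  rewrite coefZ coefXn /=.
  have -> : (a + b == a + j)%N = false by apply/negbTE; rewrite eqn_add2l neq_ltn ltn_ord orbT.
  by rewrite mulr0.
rewrite coef_sum big1 // => j _; rewrite coefZ coefXn /=.
have -> : (a + b == i + j)%N = false.
  apply/negbTE; rewrite neq_ltn; apply/orP; right.
  by rewrite -addSn leq_add // -ltnS.
by rewrite mulr0.
Qed.

Lemma rank2_delta (F : fieldType) n (p q : 'I_n) : p != q ->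
  \rank (col_mx (delta_mx 0 p : 'rV[F]_n) (delta_mx 0 q : 'rV[F]_n)) = 2%N.
Proof.
move=> pq.
have : row_free (col_mx (delta_mx 0 p : 'rV[F]_n) (delta_mx 0 q : 'rV[F]_n)).
  apply/row_freeP; exists (row_mx (delta_mx p 0) (delta_mx q 0)).
  rewrite mul_col_row !mul_delta_mx !mul_delta_mx_0 // 1?eq_sym //.
  have -> : (delta_mx 0 0 : 'M[F]_1) = 1%:M by apply/matrixP=> i j; rewrite !ord1 !mxE.
  by rewrite -scalar_mx_block.
by move/eqP.
Qed.

Lemma addmx_apply (F : fieldType) m n (A B : 'M[F]_(m, n)) i j :
  (A + B) i j = A i j + B i j.
Proof. by rewrite mxE. Qed.
Lemma oppmx_apply (F : fieldType) m n (A : 'M[F]_(m, n)) i j :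
  (- A) i j = - A i j.
Proof. by rewrite mxE. Qed.

Lemma not_trans (F : fieldType) a b (s t : H0E F a b) :
  let L := lshift b.+1 (@ord_max a) in let R := rshift a.+1 (@ord_max b) in
  s 0 L = 0 -> s 0 R = 0 -> t 0 L = 0 -> t 0 R = 0 ->
  ~ transversal_at s t.
Proof.
move=> L R sL sR tL tR /(_ (delta_mx L R - delta_mx R L)) [].
  split=> [i j|i]; rewrite !mxE.
    by case: (i == L); case: (i == R); case: (j==L); case: (j==R);
      rewrite /= ?mulr0n ?mulr1n ?subrr ?oppr0 ?opprK ?sub0r ?subr0 ?opprB ?addr0 ?opprK.
  by case: (i == L); case: (i == R); rewrite /= ?mulr0n ?subrr.
move=> h [k [kap [[_ Hk] E]]].
have := congr1 (fun M : 'M[F]_(a.+1 + b.+1) => M L R) E => /=.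
move: (wedgeE h t L R) (wedgeE s k L R); move: (wedge h t) (wedge s k) => W1 W2 e1 e2.
rewrite !mxE e1 e2 sL sR tL tR.
have -> : kap L R = 0 by rewrite -detE_top Hk coef0.
rewrite !eqxx /= eq_rlshift eq_lrshift /= !mulr0 !mul0r !subrr !addr0 subr0.
by move/eqP; rewrite oner_eq0.
Qed.

Lemma forward_a (F : fieldType) a b : (2 <= a)%N -> ~ GrK_transversal F a b.
Proof.
move=> ha HT.
pose p := lshift b.+1 (@ord0 a); pose q := lshift b.+1 (@inord a 1).
have i1 : (@inord a 1 : nat) = 1%N by rewrite inordK // ltnS (leq_trans _ ha).
have pq : p != q by rewrite eq_lshift -val_eqE /= i1.
have e0 : (@ord_max a == ord0) = false.
  by apply/negbTE; rewrite -val_eqE /= -lt0n (leq_trans _ ha).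
have e1 : (@ord_max a == inord 1) = false.
  by apply/negbTE; rewrite -val_eqE /= i1 neq_ltn (leq_trans _ ha) ?orbT.

apply: (@not_trans F a b (delta_mx 0 p) (delta_mx 0 q)).
- by rewrite mxE eqxx eq_lshift e0.
- by rewrite mxE eqxx eq_rlshift.
- rewrite mxE eqxx eq_lshift.
  by rewrite e1.
- by rewrite mxE eqxx eq_rlshift.
apply: HT; first exact: rank2_delta.
rewrite /detE big1 // => i _; rewrite big1 // => j _.
by rewrite wedgeE !mxE !eq_rlshift /= !mulr0 subrr scale0r.
Qed.

Lemma forward_b (F : fieldType) a b : (2 <= b)%N -> ~ GrK_transversal F a b.
Proof.
move=> hb HT.
pose p := rshift a.+1 (@ord0 b); pose q := rshift a.+1 (@inord b 1).
have i1 : (@inord b 1 : nat) = 1%N by rewrite inordK // ltnS (leq_trans _ hb).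
have pq : p != q by rewrite eq_rshift -val_eqE /= i1.
have e0 : (@ord_max b == ord0) = false.
  by apply/negbTE; rewrite -val_eqE /= -lt0n (leq_trans _ hb).
have e1 : (@ord_max b == inord 1) = false.
  by apply/negbTE; rewrite -val_eqE /= i1 neq_ltn (leq_trans _ hb) ?orbT.

apply: (@not_trans F a b (delta_mx 0 p) (delta_mx 0 q)).
- by rewrite mxE eqxx eq_lrshift.
- by rewrite mxE eqxx eq_rshift e0.
- by rewrite mxE eqxx eq_lrshift.
- rewrite mxE eqxx eq_rshift.
  by rewrite e1.
apply: HT; first exact: rank2_delta.
rewrite /detE big1 // => i _; rewrite big1 // => j _.
by rewrite wedgeE !mxE !eq_lrshift /= !mul0r subrr scale0r.
Qed.

Notation l0 := (lshift 2 (@ord0 1)).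
Notation l1 := (lshift 2 (lift (@ord0 1) (@ord0 0))).
Notation r0 := (rshift 2 (@ord0 1)).
Notation r1 := (rshift 2 (lift (@ord0 1) (@ord0 0))).

Lemma detE11 (F : fieldType) (w : 'M[F]_(2 + 2)) :
  detE w = w l0 r0 *: 'X^0 + (w l0 r1 + w l1 r0) *: 'X^1 + w l1 r1 *: 'X^2.
Proof. by rewrite /detE !big_ord_recl !big_ord0 !addr0 /= scalerDl !addrA. Qed.

Lemma detE11_0 (F : fieldType) (w : 'M[F]_(2 + 2)) :
  detE w = 0 <-> [/\ w l0 r0 = 0, w l0 r1 + w l1 r0 = 0 & w l1 r1 = 0].
Proof.
rewrite detE11; split => [H|[-> -> ->]]; last by rewrite !scale0r !addr0.
have c i := congr1 (fun p : {poly F} => p`_i) H.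
move: (c 0%N) (c 1%N) (c 2%N) => /=.
by rewrite !coefD !coefZ !coefXn !coef0 /= !mulr1 !mulr0 !addr0 !add0r => -> -> ->.
Qed.

Lemma idx4 (i : 'I_(2 + 2)) : [\/ i = l0, i = l1, i = r0 | i = r1].
Proof.
by case: i => [[|[|[|[|i]]]] Hi]; [constructor 1|constructor 2|constructor 3|constructor 4|];
  try apply/val_inj.
Qed.

Definition mk4 (F : fieldType) (x0 x1 x2 x3 : F) : 'rV[F]_(2 + 2) :=
  \row_i [:: x0; x1; x2; x3]`_i.

Lemma mk4E (F : fieldType) (x0 x1 x2 x3 : F) :
  [/\ mk4 x0 x1 x2 x3 0 l0 = x0, mk4 x0 x1 x2 x3 0 l1 = x1,
      mk4 x0 x1 x2 x3 0 r0 = x2 & mk4 x0 x1 x2 x3 0 r1 = x3].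
Proof. by rewrite !mxE. Qed.

Definition Img (F : fieldType) (s t : 'rV[F]_(2 + 2)) (c0 c1 c2 : F) :=
  exists h k : 'rV[F]_(2 + 2),
  [/\ c0 = (h 0 l0 * t 0 r0 - t 0 l0 * h 0 r0) + (s 0 l0 * k 0 r0 - k 0 l0 * s 0 r0),
      c1 = (h 0 l0 * t 0 r1 - t 0 l0 * h 0 r1) + (h 0 l1 * t 0 r0 - t 0 l1 * h 0 r0)
         + (s 0 l0 * k 0 r1 - k 0 l0 * s 0 r1) + (s 0 l1 * k 0 r0 - k 0 l1 * s 0 r0)
    & c2 = (h 0 l1 * t 0 r1 - t 0 l1 * h 0 r1) + (s 0 l1 * k 0 r1 - k 0 l1 * s 0 r1)].

Lemma Img_add (F : fieldType) (s t : 'rV[F]_(2 + 2)) c0 c1 c2 d0 d1 d2 :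
  Img s t c0 c1 c2 -> Img s t d0 d1 d2 -> Img s t (c0 + d0) (c1 + d1) (c2 + d2).
Proof.
move=> [h [k [-> -> ->]]] [h' [k' [-> -> ->]]].
exists (h + h'), (k + k'); rewrite !mxE; split; ring.
Qed.

Lemma Img_ext (F : fieldType) (s t : 'rV[F]_(2 + 2)) c0 c1 c2 d0 d1 d2 :
  Img s t c0 c1 c2 -> c0 = d0 -> c1 = d1 -> c2 = d2 -> Img s t d0 d1 d2.
Proof. by move=> H <- <- <-. Qed.

Lemma Img_T2 (F : fieldType) (s t : 'rV[F]_(2 + 2)) p0 p1 :
  Img s t (p0 * t 0 r0) (p0 * t 0 r1 + p1 * t 0 r0) (p1 * t 0 r1).
Proof.
exists (mk4 p0 p1 0 0), 0; case: (mk4E p0 p1 0 0) => -> -> -> ->.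
rewrite !mxE; split; ring.
Qed.

Lemma Img_T1 (F : fieldType) (s t : 'rV[F]_(2 + 2)) p0 p1 :
  Img s t (p0 * t 0 l0) (p0 * t 0 l1 + p1 * t 0 l0) (p1 * t 0 l1).
Proof.
exists (mk4 0 0 (-p0) (-p1)), 0; case: (mk4E 0 0 (-p0) (-p1)) => -> -> -> ->.
rewrite !mxE; split; ring.
Qed.

Lemma Img_S2 (F : fieldType) (s t : 'rV[F]_(2 + 2)) p0 p1 :
  Img s t (p0 * s 0 r0) (p0 * s 0 r1 + p1 * s 0 r0) (p1 * s 0 r1).
Proof.
exists 0, (mk4 (-p0) (-p1) 0 0); case: (mk4E (-p0) (-p1) 0 0) => -> -> -> ->.
rewrite !mxE; split; ring.
Qed.

Lemma Img_S1 (F : fieldType) (s t : 'rV[F]_(2 + 2)) p0 p1 :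
  Img s t (p0 * s 0 l0) (p0 * s 0 l1 + p1 * s 0 l0) (p1 * s 0 l1).
Proof.
exists 0, (mk4 0 0 p0 p1); case: (mk4E 0 0 p0 p1) => -> -> -> ->.
rewrite !mxE; split; ring.
Qed.

Lemma Img_pair (F : fieldType) (s t : 'rV[F]_(2 + 2)) f0 f1 g0 g1 :
  f0 * g1 - f1 * g0 != 0 ->
  (forall p0 p1, Img s t (p0 * f0) (p0 * f1 + p1 * f0) (p1 * f1)) ->
  (forall p0 p1, Img s t (p0 * g0) (p0 * g1 + p1 * g0) (p1 * g1)) ->
  forall c0 c1 c2, Img s t c0 c1 c2.
Proof.
move=> D Hf Hg c0 c1 c2.
set d := f0 * g1 - f1 * g0.
have := Img_add (Hf (c0 * (g1 / d) + c1 * (- g0 / d)) (c2 * (- g0 / d)))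
                (Hg (c0 * (- f1 / d) + c1 * (f0 / d)) (c2 * (f0 / d))).
move/Img_ext; apply; rewrite /d; field; exact: D.
Qed.

Lemma dep_contra (F : fieldType) n (s t : 'rV[F]_n) :
  \rank (col_mx s t) = 2%N -> forall a b : F, a *: s + b *: t = 0 -> a = 0 /\ b = 0.
Proof.
move=> rk a b E.
have /row_freeP [B HB] : row_free (col_mx s t) by rewrite /row_free rk.
pose v := row_mx (a%:M : 'M[F]_1) (b%:M : 'M[F]_1).
have v0 : v *m col_mx s t = 0 by rewrite mul_row_col !mul_scalar_mx.
have : v = 0 by rewrite -[v]mulmx1 -HB mulmxA v0 mul0mx.
move=> /matrixP Hv; split.
  by have := Hv 0 (lshift 1 0); rewrite /v row_mxEl !mxE eqxx mulr1n.
by have := Hv 0 (rshift 1 0); rewrite /v row_mxEr !mxE eqxx mulr1n.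
Qed.

Lemma alt_sub (F : fieldType) n (A B : 'M[F]_n) :
  alternating A -> alternating B -> alternating (A - B).
Proof.
move=> [A1 A2] [B1 B2]; split=> [i j|i]; rewrite !mxE.
  by rewrite (A1 i j) (B1 i j) opprD.
by rewrite A2 B2 subrr.
Qed.

Lemma decomp (V : zmodType) (A B C : V) : A = B + C + (A - B - C).
Proof. by rewrite addrC -[A - B - C]addrA -opprD subrK. Qed.

Lemma backward (F : fieldType) (h2 : (2%:R : F) != 0) : GrK_transversal F 1 1.
Proof.
move=> s t rk dt w walt.
suff [h [k [E0 E1 E2]]] : Img s t (w l0 r0) (w l0 r1 + w l1 r0) (w l1 r1).
  exists h, k, (w - wedge h t - wedge s k); split; last exact: decomp.
  split; first by apply: alt_sub; [apply: alt_sub => //|]; exact: wedge_alt.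
  move: (wedgeE h t) (wedgeE s k); move: (wedge h t) (wedge s k) => W1 W2 e1 e2.
  have E1' : w l0 r1 = (w l0 r1 + w l1 r0) - w l1 r0 by rewrite addrK.
  apply/detE11_0; rewrite !mxE !e1 !e2; split.
  - rewrite E0; ring.
  - rewrite E1' E1; ring.
  - rewrite E2; ring.
have [dAC|dAC] := eqVneq (s 0 l0 * t 0 l1 - s 0 l1 * t 0 l0) 0; last first.
  exact: (Img_pair dAC (Img_S1 s t) (Img_T1 s t)).
have [dAD|dAD] := eqVneq (s 0 l0 * t 0 r1 - s 0 l1 * t 0 r0) 0; last first.
  exact: (Img_pair dAD (Img_S1 s t) (Img_T2 s t)).
have [dBC|dBC] := eqVneq (s 0 r0 * t 0 l1 - s 0 r1 * t 0 l0) 0; last first.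
  exact: (Img_pair dBC (Img_S2 s t) (Img_T1 s t)).
have [dBD|dBD] := eqVneq (s 0 r0 * t 0 r1 - s 0 r1 * t 0 r0) 0; last first.
  exact: (Img_pair dBD (Img_S2 s t) (Img_T2 s t)).
exfalso.
move/detE11_0: dt; rewrite !wedgeE => -[c0 c1 c2].
have m03 : s 0 l0 * t 0 r1 - s 0 r1 * t 0 l0 = 0.
  have : 2%:R * (s 0 l0 * t 0 r1 - s 0 r1 * t 0 l0) = 0.
    transitivity ((s 0 l0 * t 0 r1 - t 0 l0 * s 0 r1) + (s 0 l1 * t 0 r0 - t 0 l1 * s 0 r0)
      + (s 0 l0 * t 0 r1 - s 0 l1 * t 0 r0) + (s 0 r0 * t 0 l1 - s 0 r1 * t 0 l0)); first ring.
    by rewrite c1 dAD dBC !addr0.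
  by move/eqP; rewrite mulf_eq0 (negbTE h2) /= => /eqP.
have m12 : s 0 l1 * t 0 r0 - s 0 r0 * t 0 l1 = 0.
  transitivity (s 0 l0 * t 0 r1 - s 0 r1 * t 0 l0 - (s 0 l0 * t 0 r1 - s 0 l1 * t 0 r0)
                 - (s 0 r0 * t 0 l1 - s 0 r1 * t 0 l0)); first ring.
  by rewrite m03 dAD dBC !subr0.
have M : forall i j, s 0 i * t 0 j - s 0 j * t 0 i = 0.
  have sym (x y z u : F) : x * y - z * u = 0 -> z * u - x * y = 0.
    by move=> H; rewrite -opprB H oppr0.
  have c0' : s 0 l0 * t 0 r0 - s 0 r0 * t 0 l0 = 0 by rewrite -c0; ring.
  have c2' : s 0 l1 * t 0 r1 - s 0 r1 * t 0 l1 = 0 by rewrite -c2; ring.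
  have dBD' : s 0 r0 * t 0 r1 - s 0 r1 * t 0 r0 = 0 by [].
  move=> i j; case: (idx4 i) => ->; case: (idx4 j) => ->;
    first [ exact: subrr | exact: dAC | exact: c0' | exact: m03 | exact: m12
          | exact: c2' | exact: dBD' | exact: (sym _ _ _ _ dAC) | exact: (sym _ _ _ _ c0')
          | exact: (sym _ _ _ _ m03) | exact: (sym _ _ _ _ m12) | exact: (sym _ _ _ _ c2')
          | exact: (sym _ _ _ _ dBD') ].
have [/existsP [c Hc] | ] := boolP [exists c, (s 0 c != 0) || (t 0 c != 0)].
  have E : t 0 c *: s + (- s 0 c) *: t = 0.
    apply/rowP => j; rewrite !mxE.
    transitivity (- (s 0 c * t 0 j - s 0 j * t 0 c)); first ring.
    by rewrite M oppr0.
  have [a0 b0] := dep_contra rk E.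
  have b0' : s 0 c = 0 by rewrite -[s 0 c]opprK b0 oppr0.
  by move: Hc; rewrite a0 b0' eqxx.
rewrite negb_exists => /forallP Hz.
have E : 1 *: s + 0 *: t = 0.
  apply/rowP => j; rewrite !mxE.
  by move: (Hz j); rewrite negb_or !negbK => /andP [/eqP -> _]; rewrite mulr0 mul0r addr0.
have [] := dep_contra rk E.
by move/eqP; rewrite oner_eq0.
Qed.

Theorem proposition5p6 (F : closedFieldType) (hF : [pchar F] =i pred0)
    (a b : nat) (ha : (1 <= a)%N) (hb : (1 <= b)%N) :
  GrK_transversal F a b <-> (a = 1%N /\ b = 1%N).
Proof.
split.
  move=> HT.
  case: (ltnP 1 a) => [a2|a1]; first by case: (forward_a a2 HT).
  case: (ltnP 1 b) => [b2|b1]; first by case: (forward_b b2 HT).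
  by split; apply/anti_leq/andP.
case=> -> ->; apply: backward.
apply/negP => /eqP H.
by move: (hF 2%N); rewrite !inE /= H eqxx.
Qed.
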